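(* For every detector $\hat\theta$, every $p>1$, and every measurable $\zeta_1:\mathcal{X}\to[0,\infty)$ with $0<{\rm E}[\zeta_1(\mathbf{x})]<\infty$ and $0<{\rm E}\big[\zeta_1(\mathbf{x})^{\frac{p}{p-1}}\sum_{i=1}^M P(\theta_i|\mathbf{x})^{\frac{1}{1-p}}\big]<\infty$, $$P_e\geq (M-1)^p\,{\rm E}^p\big[\zeta_1(\mathbf{x})\big]\;{\rm E}^{1-p}\Big[\zeta_1(\mathbf{x})^{\frac{p}{p-1}}\sum_{i=1}^M P(\theta_i|\mathbf{x})^{\frac{1}{1-p}}\Big].$$
   Context: $M$-ary hypothesis testing: the true hypothesis $\theta$ is a random variable with values in $\{\theta_1,\ldots,\theta_M\}$, $\mathbf{x}$ is a random observation in a measurable space $\mathcal{X}$, and $P(\theta_i|\mathbf{x})$ is the posterior probability of $\theta_i$ given $\mathbf{x}$, assumed to satisfy $P(\theta_i|\mathbf{x})>0$ for all $\mathbf{x}$, $i$. A detector is a measurable map $\hat\theta:\mathcal{X}\to\{\theta_1,\ldots,\theta_M\}$, and its probability of error is $P_e=\Pr(\hat\theta(\mathbf{x})\neq\theta)$. ${\rm E}^a[Y]$ denotes $({\rm E}[Y])^a$. *)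

(* Defs.v *)
From HB Require Import structures.
From mathcomp Require Import all_boot all_order all_algebra.
From mathcomp Require Import all_classical all_reals all_analysis.
Set Implicit Arguments. Unset Strict Implicit. Unset Printing Implicit Defensive.
Import Order.TTheory GRing.Theory Num.Theory.
Local Open Scope classical_set_scope.
Local Open Scope ring_scope.
Local Open Scope ereal_scope.

(* The observation x has law P on X, and
   post i x = P(theta_i | x) is the posterior.  The joint law of (theta, x)
   is then  Pr(theta = theta_i, x \in A) = \int_A post i x dP(x), so the
   probability of error of a detector thetahat is
     Pe = Pr(thetahat(x) <> theta)
        = \sum_i \int [thetahat x <> theta_i] P(theta_i|x) dP(x). *)
Definition error_prob d (X : measurableType d) (R : realType)
  (P : probability X R) (M : nat) (post : 'I_M -> X -> R)
  (thetahat : X -> 'I_M) : \bar R :=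
  \sum_(i < M) \int[P]_x (((thetahat x != i)%:R * post i x)%R)%:E.

Definition is_posterior d (X : measurableType d) (R : realType) (M : nat)
  (post : 'I_M -> X -> R) : Prop :=
  (forall i, measurable_fun setT (post i)) /\
  (forall i x, (0 < post i x)%R) /\
  (forall x, (\sum_(i < M) post i x)%R = 1%R).

Definition is_detector d (X : measurableType d) (M : nat)
  (thetahat : X -> 'I_M) : Prop :=
  forall i : 'I_M, measurable (thetahat @^-1` [set i]).

(* Main.v *)
Require Import Defs.
From HB Require Import structures.
From mathcomp Require Import all_boot all_order all_algebra.
From mathcomp Require Import all_classical all_reals all_analysis.
From mathcomp Require Import ring lra.
From mathcomp Require Import measurable_realfun measurable_fun_approximation.
Import Order.TTheory GRing.Theory Num.Theory.
Local Open Scope ring_scope.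

Lemma young_pt (R : realType) (p s c u : R) : 1 < p -> 0 <= s -> 0 <= c -> 0 < u ->
  p * s * c - (p - 1) * ((s * c) `^ (p / (p - 1))) * u `^ (1 / (1 - p)) <= u.
Proof.
move=> p1 s0 c0 u0.
have p0 : 0 < p by lra.
have pm1 : p - 1 != 0 by rewrite subr_eq0 gt_eqF.
have q0 : 0 < p / (p - 1) by rewrite divr_gt0 // subr_gt0.
have H := @conjugate_powR R (u `^ p^-1) (s * c * u `^ (- p^-1)) p (p / (p - 1))
  (powR_ge0 _ _) (mulr_ge0 (mulr_ge0 s0 c0) (powR_ge0 _ _)) p0 q0.
have pq : p^-1 + (p / (p - 1))^-1 = 1.
  by rewrite invf_div; field; rewrite gt_eqF.
move: {H pq}(H pq).
rewrite mulrCA -powRD; last by rewrite implybE (gt_eqF u0) orbT.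
rewrite subrr powRr0 mulr1.
rewrite -(@powRrM R u) mulVf ?gt_eqF // (powRr1 (ltW u0)).
have p0' : p != 0 by rewrite gt_eqF.
have mp0 : 1 - p != 0 by rewrite subr_eq0 lt_eqF.
move=> H.
rewrite (@powRM R (s * c) (u `^ (- p^-1))) ?(mulr_ge0 s0 c0) ?powR_ge0 // -(@powRrM R u) in H.
have e : - p^-1 * (p / (p - 1)) = 1 / (1 - p).
  by field; rewrite mp0 pm1 p0'.
rewrite e in H.
set A := (s * c) `^ (p / (p - 1)) * u `^ (1 / (1 - p)).
have H2 : p * (s * c) <= p * (u / p + A / (p / (p - 1))) by rewrite ler_pM2l.
have e2 : p * (u / p + A / (p / (p - 1))) = u + (p - 1) * A.
  by field; rewrite pm1 p0'.
rewrite e2 /A in H2. lra.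
Qed.

Lemma alg_id (R : realType) (p m E S : R) : 1 < p -> 0 <= m -> 0 <= E -> 0 < S ->
  let s := (m * E) `^ (p - 1) * S `^ (1 - p) in
  m * p * s * E - (p - 1) * s `^ (p / (p - 1)) * S
  = m `^ p * E `^ p * S `^ (1 - p).
Proof.
move=> p1 m0 E0 S0 s.
have pm1 : p - 1 != 0 by rewrite subr_eq0 gt_eqF.
have p0 : p != 0 by rewrite gt_eqF //; lra.
have a0 : 0 <= m * E by exact: mulr_ge0.
have hs : s `^ (p / (p - 1)) = (m * E) `^ p * S `^ (- p).
  rewrite /s powRM ?powR_ge0 // -!powRrM.
  have -> : (p - 1) * (p / (p - 1)) = p by field; rewrite ?pm1.
  by have -> : (1 - p) * (p / (p - 1)) = - p by field; rewrite ?pm1.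
rewrite hs -(powRM _ m0 E0).
have h1 : m * E * (m * E) `^ (p - 1) = (m * E) `^ p.
  rewrite -{1}(powRr1 a0) -powRD; first by congr (_ `^ _); ring.
  by rewrite implybE (_ : 1 + (p - 1) = p) ?p0 //; ring.
have h2 : S `^ (- p) * S = S `^ (1 - p).
  rewrite -{2}(powRr1 (ltW S0)) -powRD; first by congr (_ `^ _); ring.
  by rewrite implybE (gt_eqF S0) orbT.
have -> : m * p * s * E = p * ((m * E) * (m * E) `^ (p - 1)) * S `^ (1 - p).
  by rewrite /s; ring.
rewrite h1.
have -> : (p - 1) * ((m * E) `^ p * S `^ (- p)) * S = (p - 1) * (m * E) `^ p * (S `^ (- p) * S) by ring.
rewrite h2; ring.
Qed.

Lemma pt_sum (R : realType) (M : nat) (post : 'I_M -> R) (th : 'I_M) (p s c : R) :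
  1 < p -> 0 <= s -> 0 <= c -> (forall i, 0 < post i) ->
  (M%:R - 1) * p * s * c <=
  \sum_(i < M) ((th != i)%:R * post i) +
  (p - 1) * s `^ (p / (p - 1)) * (c `^ (p / (p - 1)) * \sum_(i < M) post i `^ (1 / (1 - p))).
Proof.
move=> p1 s0 c0 post0.
have hM : M%:R - 1 = \sum_(i < M) ((th != i)%:R : R).
  have -> : \sum_(i < M) ((th != i)%:R : R) = \sum_(i < M) (1 - (th == i)%:R).
    apply: eq_bigr => i _; case: eqP => _ /=; ring.

  rewrite sumrB sumr_const card_ord (bigD1 th) //= eqxx big1 ?addr0 //.
  by move=> i /negbTE; rewrite eq_sym => ->.
rewrite hM !mulr_suml.
have -> : (p - 1) * s `^ (p / (p - 1)) *
    (c `^ (p / (p - 1)) * \sum_(i < M) post i `^ (1 / (1 - p))) =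
    \sum_(i < M) ((p - 1) * (s * c) `^ (p / (p - 1)) * post i `^ (1 / (1 - p))).
  rewrite powRM // !mulr_sumr; apply: eq_bigr => i _; ring.
rewrite -big_split /=; apply: ler_sum => i _.
case: (th != i) => /=.
  have := @young_pt R p s c (post i) p1 s0 c0 (post0 i).
  rewrite !mul1r; lra.
rewrite !mul0r add0r.
by apply: mulr_ge0; [apply: mulr_ge0; [lra|exact: powR_ge0]|exact: powR_ge0].
Qed.

Local Open Scope classical_set_scope.
Local Open Scope ereal_scope.

Theorem mainTheorem3 (d : measure_display) (X : measurableType d)
  (R : realType) (P : probability X R) (M : nat)
  (post : 'I_M -> X -> R) (thetahat : X -> 'I_M) (p : R)
  (zeta1 : X -> R) :
  is_posterior post ->
  is_detector thetahat ->
  (1 < p)%R ->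
  measurable_fun setT zeta1 ->
  (forall x, (0 <= zeta1 x)%R) ->
  0 < \int[P]_x (zeta1 x)%:E < +oo ->
  0 < \int[P]_x ((zeta1 x `^ (p / (p - 1))) *
                   \sum_(i < M) (post i x `^ (1 / (1 - p))))%:E < +oo ->
  error_prob P post thetahat >=
    ((M%:R - 1) `^ p
     * (fine (\int[P]_x (zeta1 x)%:E)) `^ p
     * (fine (\int[P]_x ((zeta1 x `^ (p / (p - 1))) *
                   \sum_(i < M) (post i x `^ (1 / (1 - p))))%:E)) `^ (1 - p))%:E.
Proof.
move=> [mpost [post0 post1]] mth p1 mz z0 /andP[Ez0 Ezoo] /andP[S0 Soo].
have [x0 _] : exists x : X, True.
  apply: contrapT => hX.
  have hT : [set: X] = set0.
    by apply/seteqP; split => x //= _; apply: hX; exists x.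
  have := probability_setT P; rewrite hT measure0 => /eqP.
  by rewrite eqe eq_sym oner_eq0.
have M0 : (0 < M)%N by apply: leq_ltn_trans (leq0n _) (ltn_ord (thetahat x0)).
set E := fine _.
set S := fine _.
have hE : \int[P]_x (zeta1 x)%:E = E%:E.
  by rewrite fineK // ge0_fin_numE // ltW.
have hS : \int[P]_x ((zeta1 x `^ (p / (p - 1))) *
                   \sum_(i < M) (post i x `^ (1 / (1 - p))))%:E = S%:E.
  by rewrite fineK // ge0_fin_numE // ltW.
have E0 : (0 <= E)%R by rewrite -lee_fin -hE ltW.
have Sp : (0 < S)%R by rewrite -lte_fin -hS.
set m := (M%:R - 1)%R.
have m0 : (0 <= m)%R by rewrite /m subr_ge0 ler1n.
pose s := ((m * E) `^ (p - 1) * S `^ (1 - p))%R.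
have s0 : (0 <= s)%R by rewrite /s mulr_ge0 ?powR_ge0.
have p0 : (0 < p)%R by rewrite (lt_trans _ p1).
have pm0 : (0 <= p - 1)%R by rewrite subr_ge0 ltW.
have mind i : measurable_fun setT (fun x => ((thetahat x != i)%:R : R)).
  rewrite (_ : (fun x => _) = (fun x => 1 - \1_(thetahat @^-1` [set i]) x)%R); last first.
    apply/funext => x; rewrite indicE.
    case: (eqVneq (thetahat x) i) => h.
      by rewrite mem_set //= subrr.
    by rewrite memNset ?subr0 //= => /eqP; rewrite (negbTE h).
  apply: measurable_realfun.measurable_funB; first exact: measurable_cst.
  exact: measurable_realfun.measurable_indic.
have mG : measurable_fun setT (fun x => (zeta1 x `^ (p/(p-1)) *
                   \sum_(i < M) post i x `^ (1/(1-p)))%R).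
  apply: measurable_realfun.measurable_funM; first exact: measurableT_comp (measurable_realfun.measurable_powR _) mz.
  apply: measurable_fun_approximation.measurable_sum => i; exact: measurableT_comp (measurable_realfun.measurable_powR _) (mpost i).
have mf : measurable_fun setT (fun x => (\sum_(i < M) (thetahat x != i)%:R * post i x)%R).
  by apply: measurable_fun_approximation.measurable_sum => i; apply: measurable_realfun.measurable_funM.
have hep : error_prob P post thetahat =
    \int[P]_x (\sum_(i < M) ((thetahat x != i)%:R * post i x))%:E.
  rewrite /error_prob -ge0_integral_sum //.
  - by apply: eq_integral => x _; rewrite sumEFin.
  - by move=> i; apply/measurable_realfun.measurable_EFinP; apply: measurable_realfun.measurable_funM.
  - by move=> i x _; rewrite lee_fin mulr_ge0 // ltW.
have k1 : (0 <= m * p * s)%R.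
  by apply: mulr_ge0 => //; apply: mulr_ge0 => //; exact: ltW.
have k2 : (0 <= (p - 1) * s `^ (p / (p - 1)))%R by rewrite mulr_ge0 ?powR_ge0.
have mc (k : R) (g : X -> R) : measurable_fun setT g ->
    measurable_fun setT (fun x => (k%:E * (g x)%:E)).
  move=> mg; apply/measurable_realfun.measurable_EFinP.
  apply: measurable_realfun.measurable_funM => //; exact: measurable_cst.
have e1 : ((m * p * s) * E)%:E = \int[P]_x ((m * p * s)%:E * (zeta1 x)%:E).
  rewrite ge0_integralZl_EFin //; first by rewrite hE EFinM.
  - by move=> x _; rewrite lee_fin.
  - by apply/measurable_realfun.measurable_EFinP.
have e2 : (((p - 1) * s `^ (p / (p - 1))) * S)%:E =
    \int[P]_x (((p - 1) * s `^ (p / (p - 1)))%:E * (zeta1 x `^ (p / (p - 1)) *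
                   \sum_(i < M) post i x `^ (1 / (1 - p)))%:E).
  rewrite ge0_integralZl_EFin //; first by rewrite hS EFinM.
  - by move=> x _; rewrite lee_fin mulr_ge0 ?powR_ge0 // sumr_ge0 // => i _; rewrite powR_ge0.
  - by apply/measurable_realfun.measurable_EFinP.
have key : ((m * p * s) * E)%:E <=
    error_prob P post thetahat + (((p - 1) * s `^ (p / (p - 1))) * S)%:E.
  rewrite hep e1 e2 -ge0_integralD //; last 4 first.
  - by move=> x _; rewrite lee_fin sumr_ge0 // => i _; rewrite mulr_ge0 // ltW.
  - by apply/measurable_realfun.measurable_EFinP.
  - by move=> x _; rewrite lee_fin mulr_ge0 // mulr_ge0 ?powR_ge0 // sumr_ge0 // => i _; rewrite powR_ge0.
  - exact: mc.
  apply: ge0_le_integral => //.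
  - by move=> x _; rewrite lee_fin mulr_ge0.
  - apply/measurable_realfun.measurable_EFinP.
    apply: measurable_realfun.measurable_funM => //; exact: measurable_cst.
  - apply: emeasurable_funD.
      by apply/measurable_realfun.measurable_EFinP.
    apply/measurable_realfun.measurable_EFinP.
    apply: measurable_realfun.measurable_funM => //; exact: measurable_cst.
  move=> x _; rewrite -EFinD lee_fin.
  have := @pt_sum R M (post ^~ x) (thetahat x) p s (zeta1 x) p1 s0 (z0 x) (post0 ^~ x).
  by rewrite -/m !mulrA.
have ep0 : 0 <= error_prob P post thetahat.
  by rewrite hep integral_ge0 // => x _; rewrite lee_fin sumr_ge0 // => i _; rewrite mulr_ge0 // ltW.
move: key ep0; case: (error_prob P post thetahat) => [e| |] //; last first.
  by move=> _ _; rewrite leey.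
rewrite -EFinD !lee_fin => key _.
have := @alg_id R p m E S p1 m0 E0 Sp; rewrite /= -/s => <-.
rewrite -/m; lra.
Qed.
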